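(* Let $F\in Sh^{s,0}_{\Lambda_L}(X)\cap Mod(X)$, given by data $(V,\rho,W_s,\rho_s,T_s)$, and let $f$ be any local trivialization. Let $c_s$ be a pure framed cord starting and ending on (the framing curve of) $K_s$, regarded (after homotopy) as a loop in $X\setminus L$. Then $\epsilon_F(\lambda_s)=\mathrm{tr}(\rho(\ell_s))-\mathrm{tr}(\rho_s(K_s))$, $\epsilon_F(\mu_s)=1-\mathrm{tr}(\mathrm{id}_V-\rho(m_s))$, $\epsilon_F(c_s)=\mathrm{tr}(\rho(c_s)-\rho(m_s\cdot c_s))$, where $\epsilon_F=\epsilon_{(F,f)}$. In particular these values do not depend on the choice of the local trivialization.
   Context: $X=\mathbb{R}^3$ or $S^3$, $k$ a field, $(L,L')$ an $r$-component framed oriented link, $L=K_1\sqcup\dots\sqcup K_r$. Sheaves in $Sh^{s,0}_{\Lambda_L}(X)\cap Mod(X)$ (sheaves of $k$-vector spaces with micro-support at infinity in the unit conormal of $L$, microlocally simple with Morse cone in degree $0$) are equivalent to data $(V,\rho,W_s,\rho_s,T_s)$: $\rho:\pi_1(X\setminus L)\to GL(V)$ the local system on the complement ($V$ finite-dimensional), $\rho_s:\pi_1(K_s)\to GL(W_s)$ the local system on $K_s$, $T_s:W_s\to V$ the injective restriction map with one-dimensional cokernel, the meridian $m_s$ acting trivially on its image and $\rho(\ell_s)T_s=T_s\rho_s(K_s)$ for the longitude $\ell_s$; we view $W_s\subset V$. $A_c$ denotes trivialized parallel transport along a path $c$, $M_t=\rho(m_t)$. A local trivialization is an $r$-tuple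 of surjective linear maps $f_s:V\to k$ with $f_s|_{W_s}=0$. $\epsilon_{(F,f)}$ is the augmentation of the framed cord algebra $\mathrm{Cord}(L)$ given on generators by $\epsilon(c_{st})=f_sA_{c_{st}}(\mathrm{id}_V-M_t)f_t^{-1}$ for framed cords $c_{st}$ from the framing curve of $K_s$ to that of $K_t$, $\epsilon(\lambda_s)=f_sA_{\ell_s}f_s^{-1}$, $\epsilon(\mu_s)=1-f_s(\mathrm{id}_V-M_s)f_s^{-1}$, with $f_s^{-1}$ any right inverse of $f_s$. *)

(* Defs.v *)
(* Linear-algebra model of the data (V, rho, W_s, rho_s, T_s)
   attached to one component K_s.
   Conventions: V = k^(d+1) as column vectors 'cV_(d.+1); linear maps V -> V
   are matrices acting by  v |-> A *m v; W_s = k^d embedded by T : 'M_(d.+1,d);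
   a functional V -> k is a row matrix f : 'M_(1, d.+1); a map k -> V is a
   column g : 'M_(d.+1, 1). *)
From HB Require Import structures.
From mathcomp Require Import all_boot all_order all_algebra.
Set Implicit Arguments. Unset Strict Implicit. Unset Printing Implicit Defensive.
Import GRing.Theory.
Local Open Scope ring_scope.

Definition sc (k : fieldType) (a : 'M[k]_1) : k := a 0 0.

(* epsilon_(F,f)(lambda_s) = f_s A_{ell_s} f_s^{-1},  with A_{ell_s} = rho(ell_s) = Lam *)
Definition eps_lambda (k : fieldType) (n : nat)
  (f : 'M[k]_(1, n)) (g : 'M[k]_(n, 1)) (Lam : 'M[k]_n) : k :=
  sc (f *m Lam *m g).

Definition eps_mu (k : fieldType) (n : nat)
  (f : 'M[k]_(1, n)) (g : 'M[k]_(n, 1)) (M : 'M[k]_n) : k :=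
  1 - sc (f *m (1%:M - M) *m g).

(* epsilon_(F,f)(c_ss) = f_s A_c (id_V - M_s) f_s^{-1} for a pure cord c on K_s,
   whose trivialized parallel transport (as a loop) is A_c = rho(c) = C *)
Definition eps_cord (k : fieldType) (n : nat)
  (f : 'M[k]_(1, n)) (g : 'M[k]_(n, 1)) (C M : 'M[k]_n) : k :=
  sc (f *m C *m (1%:M - M) *m g).

(* Main.v *)
Require Import Defs.
From HB Require Import structures.
From mathcomp Require Import all_boot all_order all_algebra.
Import GRing.Theory.
Local Open Scope ring_scope.

Lemma key {k : fieldType} {d : nat} {A : 'M[k]_d.+1} {R : 'M[k]_d}
  {T : 'M[k]_(d.+1, d)} {f : 'M[k]_(1, d.+1)} {g : 'M[k]_(d.+1, 1)}
  (hT : \rank T = d) (hA : A *m T = T *m R) (hfW : f *m T = 0)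
  (hg : f *m g = 1%:M) :
  \tr A = sc (f *m A *m g) + \tr R.
Proof.
have : row_full T by rewrite /row_full hT.
move=> /row_fullP [Q0 HQ0].
pose Q := Q0 - Q0 *m g *m f.
have HQT : Q *m T = 1%:M by rewrite /Q mulmxBl -!mulmxA hfW !mulmx0 subr0.
have HQg : Q *m g = 0 by rewrite /Q mulmxBl -!mulmxA hg mulmx1 subrr.
pose P : 'M[k]_(d.+1, 1 + d) := row_mx g T.
pose Qc : 'M[k]_(1 + d, d.+1) := col_mx f Q.
have H1 : (Qc *m P : 'M[k]_d.+1) = 1%:M.
  rewrite /Qc /P mul_col_row hg hfW HQg HQT -scalar_mx_block //.
have H2 : (P *m Qc : 'M[k]_d.+1) = 1%:M by apply: mulmx1C.
have -> : \tr A = \tr (Qc *m A *m P).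
  rewrite -mxtrace_mulC mulmxA.
  have -> : (P *m Qc *m A : 'M[k]_d.+1) = A by rewrite H2 mul1mx.
  by [].
rewrite /Qc /P mul_col_mx mul_col_row mxtrace_block -(mulmxA Q) hA mulmxA HQT mul1mx.
by rewrite trace_mx11.
Qed.

Theorem proposition4p8 (k : fieldType) (d : nat)
  (M Lam C : 'M[k]_d.+1)        (* rho(m_s), rho(ell_s), rho(c_s) in GL(V) *)
  (R : 'M[k]_d)                  (* rho_s(K_s) in GL(W_s) *)
  (T : 'M[k]_(d.+1, d))          (* T_s : W_s -> V *)
  (f : 'M[k]_(1, d.+1))          (* local trivialization f_s : V -> k *)
  (g : 'M[k]_(d.+1, 1))          (* a right inverse f_s^{-1} of f_s *)
  (hM : M \in unitmx) (hLam : Lam \in unitmx) (hC : C \in unitmx)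
  (hR : R \in unitmx)
  (hT : \rank T = d)             (* T_s injective, cokernel of dim 1 *)
  (hmer : M *m T = T)            (* meridian acts trivially on W_s *)
  (hlong : Lam *m T = T *m R)    (* rho(ell_s) T_s = T_s rho_s(K_s) *)
  (hf : row_free f)              (* f_s surjective *)
  (hfW : f *m T = 0)             (* f_s vanishes on W_s *)
  (hg : f *m g = 1%:M) :         (* g is a right inverse of f_s *)
  [/\ eps_lambda f g Lam = \tr Lam - \tr R,
      eps_mu f g M = 1 - \tr (1%:M - M)
    & eps_cord f g C M = \tr (C - M *m C)].
Proof.
have h0 : (1%:M - M) *m T = T *m (0 : 'M[k]_d).
  by rewrite mulmxBl mul1mx hmer subrr mulmx0.
split.
- by rewrite /eps_lambda (key hT hlong hfW hg) addrK.
- by rewrite /eps_mu (key hT h0 hfW hg) linear0 addr0.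
- have h1 : (C *m (1%:M - M)) *m T = T *m (0 : 'M[k]_d).
    by rewrite -mulmxA h0 !mulmx0.
  rewrite /eps_cord -(mulmxA f C) -[sc _]addr0 -(linear0 (@mxtrace k d)) -(key hT h1 hfW hg).
  by rewrite mulmxBr mulmx1 linearB /= mxtrace_mulC linearB.
Qed.
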